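(* Let $0<\varpi<2$ and $0\le\beta_e\le1$. Let $X$ be binary with distribution $(p,1-p)$ and let $Y$ be the ternary output of the binary erasure channel $$p(y\mid x)=\begin{pmatrix}1-\beta_e&0&\beta_e\\ 0&1-\beta_e&\beta_e\end{pmatrix}.$$ Then the message importance loss capacity is $$C(\varpi,\beta_e)=\max_{p\in[0,1]}\big\{L(\varpi,X)-L(\varpi,X\mid Y)\big\}=(1-\beta_e)\big(e^{\varpi/2}-1\big),$$ attained at $p=1/2$.
   Context: For a discrete random variable $X$ with distribution $\{p(x_1),\dots,p(x_n)\}$ the message importance measure (MIM) is $L(\varpi,X)=\sum_i p(x_i)e^{\varpi(1-p(x_i))}$. For a pair $(X,Y)$ with joint law $p(x_i)p(y_j\mid x_i)$, $p(y_j)=\sum_i p(x_i)p(y_j\mid x_i)$ and $p(x_i\mid y_j)=p(x_i)p(y_j\mid x_i)/p(y_j)$, the conditional message importance measure (CMIM) is $L(\varpi,X\mid Y)=\sum_{j:\,p(y_j)>0} p(y_j)\sum_i p(x_i\mid y_j)e^{\varpi(1-p(x_i\mid y_j))}$. For a fixed transition matrix $p(y\mid x)$, the message importance loss capacity (MILC) is $C=\max_{p(x)}\{L(\varpi,X)-L(\varpi,X\mid Y)\}$. *)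

(* Defs.v *)
From Stdlib Require Import Reals Lra.
Open Scope R_scope.

Fixpoint fsum (n : nat) (f : nat -> R) : R :=
  match n with
  | O => 0
  | S k => fsum k f + f k
  end.

Definition MIM (w : R) (n : nat) (px : nat -> R) : R :=
  fsum n (fun i => px i * exp (w * (1 - px i))).

(* output law p(y_j) = sum_i p(x_i) p(y_j | x_i); W i j = p(y_j | x_i) *)
Definition out_law (n : nat) (px : nat -> R) (W : nat -> nat -> R) (j : nat) : R :=
  fsum n (fun i => px i * W i j).

Definition posterior (n : nat) (px : nat -> R) (W : nat -> nat -> R) (i j : nat) : R :=
  px i * W i j / out_law n px W j.

Definition CMIM (w : R) (n m : nat) (px : nat -> R) (W : nat -> nat -> R) : R :=
  fsum m (fun j =>
    if Rlt_dec 0 (out_law n px W j) then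
      out_law n px W j *
      fsum n (fun i => posterior n px W i j * exp (w * (1 - posterior n px W i j)))
    else 0).

Definition binary_law (p : R) (i : nat) : R :=
  match i with
  | O => p
  | _ => 1 - p
  end.

(* Binary erasure channel: inputs {0,1}, outputs {0,1,2 (= erasure)} *)
Definition BEC (be : R) (i j : nat) : R :=
  match i, j with
  | O, O => 1 - be
  | O, 1%nat => 0
  | 1%nat, O => 0
  | 1%nat, 1%nat => 1 - be
  | _, 2%nat => be
  | _, _ => 0
  end.

Definition BEC_loss (w be p : R) : R :=
  MIM w 2 (binary_law p) - CMIM w 2 3 (binary_law p) (BEC be).

(* Main.v *)
Require Import Defs.
From Stdlib Require Import Reals Lra.
Open Scope R_scope.

Lemma key_exp (x : R) : (exp x - 1) ^ 2 <= x * (exp x ^ 2 - 1) /\ 0 <= x * (exp x - 1).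
Proof.
  set (a := exp x).
  assert (Ha : 1 + x <= a) by apply exp_ineq1_le.
  assert (Hb : 1 + - x <= exp (- x)) by apply exp_ineq1_le.
  assert (Hab : a * exp (- x) = 1).
  { unfold a; rewrite <- exp_plus; replace (x + - x) with 0 by ring; apply exp_0. }
  assert (Hpos : 0 < a) by apply exp_pos.
  destruct (Rle_dec 0 x) as [Hx|Hx].
  - assert (H1 : a - 1 <= x * a) by nra.
    assert (H2 : 0 <= a - 1) by lra.
    split; nra.
  - assert (H1 : a <= 1) by nra.
    assert (H2 : x * (a + 1) <= a - 1) by nra.
    split; nra.
Qed.

Lemma mim_bound (w p : R) : 0 < w < 2 -> 0 <= p <= 1 ->
  p * exp (w * (1 - p)) + (1 - p) * exp (w * p) <= exp (w / 2).
Proof.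
  intros hw hp.
  set (t := p - 1/2).
  set (x := w * t).
  assert (E1 : exp (w * (1 - p)) = exp (w/2) * exp (- x)).
  { rewrite <- exp_plus; f_equal; unfold x, t; field. }
  assert (E2 : exp (w * p) = exp (w/2) * exp x).
  { rewrite <- exp_plus; f_equal; unfold x, t; field. }
  rewrite E1, E2.
  destruct (key_exp x) as [K1 K2].
  set (a := exp x) in *.
  assert (Hab : a * exp (- x) = 1).
  { unfold a; rewrite <- exp_plus; replace (x + - x) with 0 by ring; apply exp_0. }
  set (b := exp (- x)) in *.
  assert (Hpos : 0 < a) by apply exp_pos.
  assert (HE : 0 < exp (w/2)) by apply exp_pos.
  assert (Ht : 0 <= t * (a ^ 2 - 1)).
  { assert (0 <= w * (t * (a - 1))) by (unfold x in K2; nra).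
    assert (0 <= t * (a - 1)).
    { destruct (Rle_dec 0 (t * (a - 1))); auto. nra. }
    nra. }
  assert (K3 : (a - 1) ^ 2 <= 2 * t * (a ^ 2 - 1)) by (unfold x in K1; nra).
  assert (HS : (1/2 + t) * b + (1/2 - t) * a <= 1).
  { assert (a * ((1/2 + t) * b + (1/2 - t) * a) <= a * 1).
    { replace (a * ((1/2 + t) * b + (1/2 - t) * a)) with ((1/2+t)*(a*b) + (1/2-t)*a^2) by ring.
      rewrite Hab. nra. }
    nra. }
  clearbody b a. assert (HEq : p * (exp (w/2) * b) + (1 - p) * (exp (w/2) * a)
     = exp (w/2) * ((1/2 + t) * b + (1/2 - t) * a)) by (unfold t; field).
  rewrite HEq. nra.
Qed.

Lemma cmim_eq (w be p : R) : 0 <= be <= 1 -> 0 <= p <= 1 ->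
  CMIM w 2 3 (binary_law p) (BEC be) = (1 - be) + be * MIM w 2 (binary_law p).
Proof.
  intros hbe hp.
  unfold CMIM, MIM, posterior, out_law; simpl.
  destruct (Rlt_dec 0 (0 + p * (1 - be) + (1 - p) * 0)) as [H0|H0];
  destruct (Rlt_dec 0 (0 + p * 0 + (1 - p) * (1 - be))) as [H1|H1];
  destruct (Rlt_dec 0 (0 + p * be + (1 - p) * be)) as [H2|H2].
  all: try (replace (0 + p * be + (1 - p) * be) with be in * by ring).
  all: try (replace (0 + p * (1 - be) + (1 - p) * 0) with (p * (1 - be)) in * by ring).
  all: try (replace (0 + p * 0 + (1 - p) * (1 - be)) with ((1 - p) * (1 - be)) in * by ring).
  all: rewrite ?Rdiv_0_l.
  all: repeat match goal with
       | |- context [?d / ?d] => rewrite (Rdiv_diag d) by (apply Rgt_not_eq; lra)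
       | |- context [?c * ?e / ?e] =>
           replace (c * e / e) with c by (field; apply Rgt_not_eq; lra)
       end.
  all: try (assert (Hbe0 : be = 0) by lra; subst be).
  all: try (assert (Hp0 : p * (1 - be) = 0) by nra).
  all: try (assert (Hp1 : (1 - p) * (1 - be) = 0) by nra).
  all: rewrite ?Rminus_diag, ?Rminus_0_r, ?Rmult_0_r, ?exp_0; try nra.
Qed.

Theorem proposition2 (w be : R) (hw : 0 < w < 2) (hbe : 0 <= be <= 1) :
  (forall p : R, 0 <= p <= 1 -> BEC_loss w be p <= (1 - be) * (exp (w / 2) - 1)) /\
  BEC_loss w be (1 / 2) = (1 - be) * (exp (w / 2) - 1).
Proof.
  assert (Hl : forall p, 0 <= p <= 1 ->
     BEC_loss w be p = (1 - be) * (p * exp (w * (1 - p)) + (1 - p) * exp (w * p) - 1)).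
  { intros p hp. unfold BEC_loss. rewrite cmim_eq by auto.
    unfold MIM; simpl. replace (1 - (1 - p)) with p by field. field. }
  split.
  - intros p hp. rewrite Hl by auto.
    pose proof (mim_bound w p hw hp). nra.
  - rewrite Hl by lra.
    replace (1 - 1/2) with (1/2) by field.
    replace (w * (1/2)) with (w / 2) by field. field.
Qed.
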